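(* Let $G$ and $H$ be finite connected free graphs. If there exists an onto edge homomorphism from $G$ to $H$, then $\phi(G)\le \phi(H)$.
   Context: All graphs are finite and simple. A homomorphism $f:G\to H$ is a map $f:V(G)\to V(H)$ such that $uv\in E(G)$ implies $f(u)f(v)\in E(H)$; it is an onto edge homomorphism if every edge of $H$ equals $f(x)f(y)$ for some edge $xy\in E(G)$. An independent set of a graph $G$ is called a free independent set if it is contained in at least two distinct maximal independent sets of $G$. A graph $G$ is free if every vertex of $G$ lies in some free independent set. The free chromatic number $\phi(G)$ is the minimum positive integer $t$ such that $V(G)=V_1\cup\cdots\cup V_t$ is a partition of $V(G)$ into sets each of which is a free independent set of $G$; if $G$ is not free, $\phi(G)=\infty$. *)

(* Defs.v *)
From Stdlib Require Import ClassicalEpsilon.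
From mathcomp Require Import all_boot.
Set Implicit Arguments. Unset Strict Implicit. Unset Printing Implicit Defensive.

Section Graphs.
Variable T : finType.
Variable e : rel T.

Definition simple_graph : Prop := symmetric e /\ irreflexive e.

(* connected graphs are nonempty (standard convention) *)
Definition connected_graph : Prop :=
  (0 < #|T|)%N /\ forall x y : T, connect e x y.

Definition independent (S : {set T}) : bool :=
  [forall x in S, forall y in S, ~~ e x y].

Definition maximal_independent (M : {set T}) : bool := maxset independent M.

Definition free_independent (S : {set T}) : bool :=
  independent S &&
  [exists M1 : {set T}, exists M2 : {set T},
     [&& maximal_independent M1, maximal_independent M2, M1 != M2,
         S \subset M1 & S \subset M2]].

Definition free_graph : Prop :=
  forall v : T, exists S : {set T}, free_independent S /\ v \in S.

Definition free_partition_into (t : nat) : bool :=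
  [exists P : {set {set T}},
     [&& partition P [set: T], [forall B in P, free_independent B] & #|P| == t]].

Definition free_col_pred : pred nat := fun t => (0 < t) && free_partition_into t.

(* free chromatic number; None stands for infinity *)
Definition free_chromatic_number : option nat :=
  match excluded_middle_informative (exists t, free_col_pred t) with
  | left h => Some (ex_minn h)
  | right _ => None
  end.

End Graphs.

Definition le_inf (a b : option nat) : Prop :=
  match a, b with
  | _, None => True
  | None, Some _ => False
  | Some x, Some y => (x <= y)%N
  end.

Definition homomorphism (T1 T2 : finType) (e1 : rel T1) (e2 : rel T2)
  (f : T1 -> T2) : Prop :=
  forall x y, e1 x y -> e2 (f x) (f y).

Definition onto_edge_homomorphism (T1 T2 : finType) (e1 : rel T1) (e2 : rel T2)
  (f : T1 -> T2) : Prop :=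
  homomorphism e1 e2 f /\
  forall u v, e2 u v -> exists x y, e1 x y /\
     ((f x = u /\ f y = v) \/ (f x = v /\ f y = u)).

(* Main.v *)
Require Import Defs.
From mathcomp Require Import all_boot.
From Stdlib Require Import ClassicalEpsilon.

Section Pull.
Variables (TG TH : finType) (eG : rel TG) (eH : rel TH) (f : TG -> TH).

Lemma pre_indep (B : {set TH}) : homomorphism eG eH f ->
  independent eH B -> independent eG (f @^-1: B).
Proof.
move=> hom /forall_inP iB; apply/forall_inP => x; rewrite inE => xB.
apply/forall_inP => y; rewrite inE => yB; apply/negP => exy.
have /forall_inP := iB _ xB; move/(_ _ yB)/negP; apply; exact: hom.
Qed.

Lemma pre_free (B : {set TH}) : onto_edge_homomorphism eG eH f ->
  free_independent eH B -> free_independent eG (f @^-1: B).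
Proof.
move=> [hom onto] /andP[iB /existsP[M1 /existsP[M2 /and5P[m1 m2 neq s1 s2]]]].
rewrite /free_independent pre_indep //=.
have [i1 mx1] := maxsetP m1; have [i2 mx2] := maxsetP m2.
have [N1 n1 sN1] := maxset_exists (pre_indep _ hom i1).
have [N2 n2 sN2] := maxset_exists (pre_indep _ hom i2).
apply/existsP; exists N1; apply/existsP; exists N2.
rewrite /maximal_independent n1 n2 /=.
apply/and3P; split; first last.
- apply/subsetP => x xB; apply: (subsetP sN2); move: xB; rewrite !inE => h; exact: (subsetP s2).
- apply/subsetP => x xB; apply: (subsetP sN1); move: xB; rewrite !inE => h; exact: (subsetP s1).
apply/eqP => eN.
have [u uM1 uM2] : exists2 u, u \in M1 & u \notin M2.
  case: (boolP (M1 \subset M2)) => [sub|].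
    by move: neq; rewrite (mx1 _ i2 sub) eqxx.
  by case/subsetPn => u; exists u.
have nind : ~~ independent eH (u |: M2).
  apply/negP => ind.
  have := mx2 _ ind (subsetUr _ _) => eq2.
  by move: uM2; rewrite -eq2 setU11.
have [a aU [b bU eab]] : exists2 a, a \in u |: M2 & exists2 b, b \in u |: M2 & eH a b.
  move: nind; rewrite /independent negb_forall_in => /exists_inP[a aU].
  rewrite negb_forall_in => /exists_inP[b bU]; rewrite negbK => eab.
  by exists a => //; exists b.
have inN : forall z, z \in u |: M2 -> forall x, f x = z -> x \in N1.
  move=> z; rewrite in_setU1 => /orP[/eqP -> | zM2] x fx.
    by apply: (subsetP sN1); rewrite inE fx.
  by rewrite eN; apply: (subsetP sN2); rewrite inE fx.
have [x [y [exy H]]] := onto _ _ eab.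
have [xN yN] : x \in N1 /\ y \in N1.
  by case: H => [[fx fy]|[fx fy]]; split; [exact: inN aU _ fx|exact: inN bU _ fy|exact: inN bU _ fx|exact: inN aU _ fy].
have [iN _] := maxsetP n1.
by move: iN => /forall_inP /(_ _ xN) /forall_inP /(_ _ yN); rewrite exy.
Qed.

Lemma pull_part (P : {set {set TH}}) : (0 < #|TG|)%N ->
  onto_edge_homomorphism eG eH f ->
  partition P [set: TH] -> [forall B in P, free_independent eH B] ->
  exists t, free_col_pred eG t /\ (t <= #|P|)%N.
Proof.
move=> TG0 oh /and3P[/eqP cP tP nP0] /forall_inP fP.
set P' := [set f @^-1: (B : {set TH}) | B : {set TH} in P] :\ set0.
have inP' : forall x, f @^-1: pblock P (f x) \in P' /\ x \in f @^-1: pblock P (f x).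
  move=> x; have cx : f x \in cover P by rewrite cP inE.
  have xin : x \in f @^-1: pblock P (f x) by rewrite inE mem_pblock.
  split=> //; rewrite !inE; apply/andP; split.
    by apply/negP => /eqP e0; move: xin; rewrite e0 inE.
  by apply: imset_f; apply: pblock_mem.
exists #|P'|; split; last first.
  by apply: leq_trans (subset_leq_card (subsetDl _ _)) (leq_imset_card _ _).
apply/andP; split.
  move/card_gt0P: TG0 => [x _].
  by apply/card_gt0P; exists (f @^-1: pblock P (f x)); case: (inP' x).
apply/existsP; exists P'; rewrite eqxx andbT; apply/andP; split.
  apply/and3P; split.
  - apply/eqP/setP => x; rewrite inE; apply/bigcupP.
    by case: (inP' x) => h1 h2; exists (f @^-1: pblock P (f x)).
  - apply/trivIsetP => A B; rewrite !inE => /andP[_ /imsetP[A0 A0P ->]] /andP[_ /imsetP[B0 B0P ->]] neAB.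
    have neq : A0 != B0 by apply: contraNneq neAB => ->.
    have dj := trivIsetP tP _ _ A0P B0P neq.
    apply/pred0P => x /=; rewrite !inE.
    by apply/negP => /andP[h1 h2]; move: (disjointFr dj h1); rewrite h2.
  - by rewrite !inE eqxx.
apply/forall_inP => A; rewrite !inE => /andP[_ /imsetP[A0 A0P ->]].
exact: pre_free (fP _ A0P).
Qed.
End Pull.

Theorem mainTheorem1 (TG TH : finType) (eG : rel TG) (eH : rel TH) :
  simple_graph eG -> simple_graph eH ->
  connected_graph eG -> connected_graph eH ->
  free_graph eG -> free_graph eH ->
  (exists f : TG -> TH, onto_edge_homomorphism eG eH f) ->
  le_inf (free_chromatic_number eG) (free_chromatic_number eH).
Proof.
move=> _ _ [TG0 _] _ _ _ [f oh].
rewrite /free_chromatic_number.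
case: (excluded_middle_informative (exists t, free_col_pred eH t)) => [hH|_]; last first.
  by case: excluded_middle_informative.
case: ex_minnP => m /andP[m0 /existsP[P /and3P[pP fP /eqP cP]]] _.
have [t [ct tle]] := @pull_part _ _ eG eH f P TG0 oh pP fP.
case: excluded_middle_informative => [hG|no]; last by exfalso; apply: no; exists t.
case: ex_minnP => k _ kmin /=.
by apply: leq_trans (kmin _ ct) _; rewrite -cP.
Qed.
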